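(* In every model of $\mathsf{Md}_\bot$ the following conditional equations hold for all elements $x,y$: (1) $x\cdot y=1\rightarrow 0\cdot y=0$; (2) $x\cdot y=1\rightarrow x^{-1}=y$; (3) $0\cdot x=0\cdot y\rightarrow 0\cdot(x\cdot y)=0\cdot x$; (4) $0\cdot x\cdot y=0\rightarrow 0\cdot x=0$; (5) $0\cdot(x+y)=0\rightarrow 0\cdot x=0$; (6) $0\cdot x^{-1}=0\rightarrow 0\cdot x=0$; (7) $0\cdot x=\bot\rightarrow x=\bot$.
   Context: The signature has one sort, constants $0,1,\bot$, binary operations $+,\cdot$ and unary operations $-$ and $(\,\cdot\,)^{-1}$; $^{-1}$ binds stronger than $\cdot$, which binds stronger than $+$. $\mathsf{Md}_\bot$ is the set of equations (variables universally quantified): $(x+y)+z=x+(y+z)$; $x+y=y+x$; $x+0=x$; $x+(-x)=0\cdot x$; $(x\cdot y)\cdot z=x\cdot(y\cdot z)$; $x\cdot y=y\cdot x$; $1\cdot x=x$; $x\cdot(y+z)=x\cdot y+x\cdot z$; $-(-x)=x$; $0\cdot(x\cdot x)=0\cdot x$; $(x^{-1})^{-1}=x+0\cdot x^{-1}$; $x\cdot x^{-1}=1+0\cdot x^{-1}$; $(x\cdot y)^{-1}=x^{-1}\cdot y^{-1}$; $1^{-1}=1$; $0^{-1}=\bot$; $x+\bot=\bot$; $x\cdot\bot=\bot$. *)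

(* Defs.v *)
Record MdBot := {
  carrier :> Type;
  zero : carrier;
  one : carrier;
  bot : carrier;
  add : carrier -> carrier -> carrier;
  mul : carrier -> carrier -> carrier;
  opp : carrier -> carrier;
  inv : carrier -> carrier;
  ax_addA : forall x y z, add (add x y) z = add x (add y z);
  ax_addC : forall x y, add x y = add y x;
  ax_add0 : forall x, add x zero = x;
  ax_addN : forall x, add x (opp x) = mul zero x;
  ax_mulA : forall x y z, mul (mul x y) z = mul x (mul y z);
  ax_mulC : forall x y, mul x y = mul y x;
  ax_mul1 : forall x, mul one x = x;
  ax_mulD : forall x y z, mul x (add y z) = add (mul x y) (mul x z);
  ax_oppK : forall x, opp (opp x) = x;
  ax_0sq : forall x, mul zero (mul x x) = mul zero x;
  ax_invK : forall x, inv (inv x) = add x (mul zero (inv x));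
  ax_mulV : forall x, mul x (inv x) = add one (mul zero (inv x));
  ax_invM : forall x y, inv (mul x y) = mul (inv x) (inv y);
  ax_inv1 : inv one = one;
  ax_inv0 : inv zero = bot;
  ax_addbot : forall x, add x bot = bot;
  ax_mulbot : forall x, mul x bot = bot
}.

Arguments zero {m}.
Arguments one {m}.
Arguments bot {m}.
Arguments add {m}.
Arguments mul {m}.
Arguments opp {m}.
Arguments inv {m}.

(* Main.v *)
Require Import Defs.

Section S.
Variable M : MdBot.

Lemma L0 : @mul M zero one = zero.
Proof. rewrite ax_mulC. apply ax_mul1. Qed.

Lemma L00 : @mul M zero zero = zero.
Proof.
  pose proof (ax_mulD M zero one zero) as h.
  rewrite ax_add0, L0 in h.
  rewrite ax_addC, ax_add0 in h. symmetry; exact h.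
Qed.

Lemma Lstar (a b : M) : add (mul a b) (mul zero a) = mul a b.
Proof.
  pose proof (ax_mulD M a b zero) as h.
  rewrite ax_add0 in h. rewrite (ax_mulC M a zero) in h. symmetry; exact h.
Qed.

Lemma Lx (a : M) : add a (mul zero a) = a.
Proof.
  pose proof (Lstar a one) as h. rewrite (ax_mulC M a one), ax_mul1 in h. exact h.
Qed.

Lemma addz (a : M) : add zero a = a.
Proof. rewrite ax_addC. apply ax_add0. Qed.

Lemma C1 (a b : M) : mul a b = one -> mul zero b = zero.
Proof.
  intro H. pose proof (Lstar b a) as h. rewrite (ax_mulC M b a), H in h.
  apply (f_equal (mul zero)) in h.
  rewrite ax_mulD, L0, <- ax_mulA, L00, addz in h. exact h.
Qed.

Lemma C2 (a b : M) : mul a b = one -> inv a = b.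
Proof.
  intro H.
  assert (h1 : mul (inv b) (inv a) = one).
  { rewrite <- ax_invM, ax_mulC, H. apply ax_inv1. }
  pose proof (C1 _ _ h1) as h2.
  pose proof (ax_mulV M a) as h3. rewrite h2, ax_add0 in h3.
  rewrite <- (ax_mul1 M b), <- h3, (ax_mulC M a (inv a)), ax_mulA, H.
  rewrite ax_mulC. symmetry. apply ax_mul1.
Qed.

End S.

Theorem proposition2p5 (M : MdBot) (x y : M) :
  (mul x y = one -> mul zero y = zero) /\
  (mul x y = one -> inv x = y) /\
  (mul zero x = mul zero y -> mul zero (mul x y) = mul zero x) /\
  (mul (mul zero x) y = zero -> mul zero x = zero) /\
  (mul zero (add x y) = zero -> mul zero x = zero) /\
  (mul zero (inv x) = zero -> mul zero x = zero) /\
  (mul zero x = bot -> x = bot).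
Proof.
  split; [apply C1|]. split; [apply C2|].
  split.
  { intro H.
    assert (E : mul zero (mul x y) = mul (mul zero x) (mul zero y)).
    { rewrite ax_mulA, <- (ax_mulA M x zero y), (ax_mulC M x zero), (ax_mulA M zero x y),
        <- (ax_mulA M zero zero), L00. reflexivity. }
    rewrite E, <- H.
    rewrite ax_mulA, <- (ax_mulA M x zero x), (ax_mulC M x zero), ax_mulA,
      <- (ax_mulA M zero zero), L00, ax_0sq. reflexivity. }
  split.
  { intro H. pose proof (Lstar M x y) as h.
    apply (f_equal (mul zero)) in h.
    rewrite ax_mulD, <- (ax_mulA M zero zero), L00, <- ax_mulA, H, addz in h.
    exact h. }
  split.
  { intro H.
    assert (h : add (add x y) (mul zero x) = add x y).
    { rewrite ax_addA, (ax_addC M y), <- ax_addA, Lx. reflexivity. }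
    apply (f_equal (mul zero)) in h.
    rewrite ax_mulD, H, <- ax_mulA, L00, addz in h. exact h. }
  split.
  { intro H. pose proof (ax_mulV M x) as h. rewrite H, ax_add0 in h.
    rewrite ax_mulC in h. exact (C1 _ _ _ h). }
  { intro H. rewrite <- (Lx M x), H. apply ax_addbot. }
Qed.
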